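(* Let $\beta\in(\frac{1+\sqrt5}{2},2)$. Suppose the quasi-greedy orbit of $1$ hits $\beta^{-1}(\beta-1)^{-1}$ for the first time, i.e. there is a minimal $k\ge1$ with $Q^k(1)=\beta^{-1}(\beta-1)^{-1}$ and $Q^i(1)\in[0,\beta^{-1})\cup(\beta^{-1}(\beta-1)^{-1},(\beta-1)^{-1}]$ for $1\le i\le k-1$. Then the greedy $\beta$-expansion of $1$ is finite, and there exist $n_0\ge1$ and a word $a_1\cdots a_{n_0}\in\{0,1\}^{n_0}$ with $a_{n_0}=1$ such that the quasi-greedy expansion of $1$ is $(\eta_i)=\big(a_1\cdots a_{n_0}\,\overline{a_1\cdots a_{n_0}}\big)^\infty$.
   Context: For $x\in[0,(\beta-1)^{-1}]$, a $\beta$-expansion of $x$ is $(a_n)\in\{0,1\}^{\mathbb{N}}$ with $x=\sum_n a_n\beta^{-n}$. The greedy map $G$ on $[0,(\beta-1)^{-1}]$ is $G(x)=\beta x \bmod 1$ for $x\in[0,1)$ and $G(x)=\beta x-1$ for $x\in[1,(\beta-1)^{-1}]$; the greedy expansion of $x$ has digits $a_n=\lfloor\beta G^{n-1}(x)\rfloor$. The quasi-greedy expansion $(\eta_i)$ of $1$ equals the greedy expansion of $1$ if the latter is infinite (does not end in $0^\infty$); if the greedy expansion is $a_1\cdots a_n0^\infty$ with $a_n=1$, then $(\eta_i)=(a_1\cdots a_{n-1}(a_n-1))^\infty$. The quasi-greedy orbit of $1$ is $Q^i(1)=\sum_{j\ge1}\eta_{i+j}\beta^{-j}$, $i\ge1$.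 For a word or sequence, the bar denotes the reflection $\overline{a}=1-a$ applied digitwise. *)

(* Defs.v *)
From Stdlib Require Import Reals Lra Lia ZArith.
Open Scope R_scope.

Definition greedy_map (beta x : R) : R :=
  if Rlt_dec x 1 then beta * x - IZR (Int_part (beta * x)) else beta * x - 1.

(* Greedy digits of x, indexed from 1: a_n = floor (beta * G^(n-1) x).
   (The value at index 0 is irrelevant.) *)
Definition greedy_digit (beta x : R) (n : nat) : Z :=
  Int_part (beta * Nat.iter (n - 1) (greedy_map beta) x).

Definition greedy_finite (beta x : R) : Prop :=
  exists N : nat, forall m : nat, (N <= m)%nat -> greedy_digit beta x m = 0%Z.

Definition quasi_greedy_one (beta : R) (eta : nat -> Z) : Prop :=
  (~ greedy_finite beta 1 /\
     forall i : nat, (1 <= i)%nat -> eta i = greedy_digit beta 1 i)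
  \/
  (exists n : nat, (1 <= n)%nat /\ greedy_digit beta 1 n = 1%Z /\
     (forall m : nat, (n < m)%nat -> greedy_digit beta 1 m = 0%Z) /\
     forall i : nat, (1 <= i)%nat ->
       let r := (((i - 1) mod n) + 1)%nat in
       eta i = (if Nat.eqb r n then (greedy_digit beta 1 n - 1)%Z
                else greedy_digit beta 1 r)).

Definition Qorbit (beta : R) (eta : nat -> Z) (i : nat) (q : R) : Prop :=
  infinite_sum (fun j : nat => IZR (eta (i + S j)%nat) / beta ^ (S j)) q.

(* The sequence eta (indexed from 1) equals (w_1..w_n0 bar(w_1..w_n0))^infinity. *)
Definition periodic_with_reflection (eta : nat -> Z) (w : nat -> Z) (n0 : nat) : Prop :=
  forall i : nat, (1 <= i)%nat ->
    let r := ((i - 1) mod (2 * n0))%nat in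
    eta i = (if Nat.ltb r n0 then w (S r) else (1 - w (S (r - n0))))%Z.

(* Main.v *)
Require Import Defs.
From Stdlib Require Import Reals Lra Lia ZArith Classical.
Open Scope R_scope.

Definition GEN (beta : R) (e : nat -> Z) (s : nat -> R) : Prop :=
  1 < beta /\ (forall m, e (S m) = 0%Z \/ e (S m) = 1%Z) /\
  (forall m, 0 <= s m <= 1) /\ s 0%nat = 1 /\
  (forall m, s (S m) = beta * s m - IZR (e (S m))) /\
  (forall N, exists m, (N <= m)%nat /\ e (S m) <> 0%Z).

Lemma gen_partial beta e s i N : GEN beta e s ->
  sum_f_R0 (fun j : nat => IZR (e (i + S j)%nat) / beta ^ (S j)) N
  = s i - s (i + S N)%nat / beta ^ (S N).
Proof.
  intros (Hb & He & Hs & H0 & Hr & Hnz).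
  assert (Hp : forall n, beta ^ n <> 0) by (intro n; apply pow_nonzero; lra).
  induction N as [|N IH].
  - simpl. replace (i + 1)%nat with (S i) by lia. rewrite Hr. field. lra.
  - change (sum_f_R0 ?f (S N)) with (sum_f_R0 f N + f (S N)). rewrite IH. cbv beta.
    replace (i + S (S N))%nat with (S (i + S N)) by lia. rewrite Hr.
    change (beta ^ S (S N)) with (beta * beta ^ (S N)).
    field. split; [apply Hp|lra].
Qed.

Lemma gen_qorbit beta e s i : GEN beta e s -> Qorbit beta e i (s i).
Proof.
  intros HG. pose proof HG as (Hb & He & Hs & H0 & Hr & Hnz).
  unfold Qorbit, infinite_sum. intros eps Heps.
  destruct (pow_lt_1_zero (/ beta)) with (y := eps) as [N HN]; auto.
  { rewrite Rabs_right. rewrite <- Rinv_1; apply Rinv_lt_contravar; lra. left; apply Rinv_0_lt_compat; lra. }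
  exists N. intros n Hn. rewrite (gen_partial beta e s i n HG).
  unfold Rdist.
  replace (s i - s (i + S n)%nat / beta ^ S n - s i) with (- (s (i + S n)%nat * (/beta) ^ S n)).
  2:{ rewrite pow_inv. unfold Rdiv. ring. }
  rewrite Rabs_Ropp. rewrite Rabs_mult.
  assert (Hx : Rabs ((/ beta) ^ S n) < eps) by (apply HN; lia).
  assert (0 <= Rabs (s (i + S n)%nat) <= 1).
  { destruct (Hs (i + S n)%nat). rewrite Rabs_right; lra. }
  assert (0 <= Rabs ((/ beta) ^ S n)) by apply Rabs_pos.
  nra.
Qed.

Lemma gen_dig0 beta e s m : GEN beta e s -> s m < / beta -> e (S m) = 0%Z.
Proof.
  intros (Hb & He & Hs & H0 & Hr & Hnz) Hm.
  assert (beta * s m < 1).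
  { replace 1 with (beta * / beta) by (field; lra). apply Rmult_lt_compat_l; lra. }
  pose proof (Hr m). destruct (Hs (S m)). destruct (He m) as [E|E]; auto.
  rewrite E in *. simpl in *. lra.
Qed.

Lemma gen_dig1 beta e s m : GEN beta e s -> / beta < s m -> e (S m) = 1%Z.
Proof.
  intros (Hb & He & Hs & H0 & Hr & Hnz) Hm.
  assert (1 < beta * s m).
  { replace 1 with (beta * / beta) by (field; lra). apply Rmult_lt_compat_l; lra. }
  pose proof (Hr m). destruct (Hs (S m)). destruct (He m) as [E|E]; auto.
  rewrite E in *. simpl in *. lra.
Qed.

Lemma gen_dig_eq beta e s x y : GEN beta e s -> s x = s y -> s x <> / beta ->
  e (S x) = e (S y).
Proof.
  intros HG Hxy Hne. destruct (Rtotal_order (s x) (/ beta)) as [H|[H|H]].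
  - rewrite (gen_dig0 _ _ _ x HG H), (gen_dig0 _ _ _ y HG); auto; lra.
  - contradiction.
  - rewrite (gen_dig1 _ _ _ x HG H), (gen_dig1 _ _ _ y HG); auto; lra.
Qed.

Lemma gen_zero beta e s x : GEN beta e s -> s x = 0 ->
  forall m, s (x + m)%nat = 0 /\ e (S (x + m)) = 0%Z.
Proof.
  intros HG Hx. pose proof HG as (Hb & He & Hs & H0 & Hr & Hnz).
  assert (A : forall m, s (x + m)%nat = 0).
  { induction m. replace (x + 0)%nat with x by lia; auto.
    replace (x + S m)%nat with (S (x + m)) by lia. rewrite Hr, IHm.
    destruct (He (x + m)%nat) as [E|E]; rewrite E; simpl; try lra.
    pose proof (Hs (S (x+m))). rewrite Hr, IHm, E in H. simpl in H. lra. }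
  intro m. split; auto.
  destruct (He (x + m)%nat) as [E|E]; auto.
  pose proof (Hs (S (x+m))). rewrite Hr, A, E in H. simpl in H. lra.
Qed.

Lemma gen_half beta e s x : GEN beta e s -> s x = / beta ->
  e (S x) = 0%Z /\ s (S x) = 1.
Proof.
  intros HG Hx. pose proof HG as (Hb & He & Hs & H0 & Hr & Hnz).
  destruct (He x) as [E|E].
  - split; auto. rewrite Hr, E, Hx. simpl. field. lra.
  - exfalso. assert (Z0 : s (S x) = 0) by (rewrite Hr, E, Hx; simpl; field; lra).
    destruct (Hnz (S x)) as [m [Hm Hem]].
    pose proof (gen_zero _ _ _ _ HG Z0 (m - S x)) as [_ Hz].
    replace (S x + (m - S x))%nat with m in Hz by lia. contradiction.
Qed.

Lemma gen_rig beta e s a b M : GEN beta e s -> s a = s b ->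
  (forall j, (j < M)%nat -> s (a + j)%nat <> / beta) ->
  forall j, (j <= M)%nat -> s (a + j)%nat = s (b + j)%nat.
Proof.
  intros HG Hab Hne. pose proof HG as (Hb & He & Hs & H0 & Hr & Hnz).
  induction j; intros Hj.
  - replace (a+0)%nat with a by lia; replace (b+0)%nat with b by lia; auto.
  - replace (a + S j)%nat with (S (a + j)) by lia.
    replace (b + S j)%nat with (S (b + j)) by lia.
    rewrite !Hr. rewrite IHj by lia.
    rewrite (gen_dig_eq _ _ _ (a+j)%nat (b+j)%nat HG); auto. rewrite IHj by lia; auto.

Qed.

Lemma gen_main beta e s : GEN beta e s ->
  (1 + sqrt 5) / 2 < beta -> beta < 2 ->
  (exists k : nat, (1 <= k)%nat /\
     Qorbit beta e k (/ beta * / (beta - 1)) /\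
     forall i : nat, (1 <= i)%nat -> (i <= k - 1)%nat ->
       exists q : R, Qorbit beta e i q /\
         ((0 <= q /\ q < / beta) \/
          (/ beta * / (beta - 1) < q /\ q <= / (beta - 1)))) ->
  exists n0, (1 <= n0)%nat /\ s (2 * n0)%nat = 1 /\ e n0 = 1%Z /\
    periodic_with_reflection e e n0.
Proof.
  intros HG Hphi Hb2 [k [Hk [Hqk Hreg]]].
  pose proof HG as (Hb & He & Hs & H0 & Hr & Hnz).
  set (ib := / beta). set (Li := / (beta - 1)).
  assert (Hib : beta * ib = 1) by (unfold ib; field; lra).
  assert (HLi : (beta - 1) * Li = 1) by (unfold Li; field; lra).
  assert (Hgold : beta * beta - beta - 1 > 0).
  { assert (H5 := sqrt_sqrt 5 ltac:(lra)). assert (0 <= sqrt 5) by apply sqrt_pos. nra. }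
  assert (Hibp : 0 < ib) by (unfold ib; apply Rinv_0_lt_compat; lra).
  assert (HLip : 0 < Li) by (unfold Li; apply Rinv_0_lt_compat; lra).
  set (c := ib * Li).
  assert (Hc1 : ib < c) by (unfold c; nra).
  assert (Hc2 : c < 1) by (unfold c; nra).
  assert (HL1 : 1 <= Li) by nra.
  assert (HbL : beta * Li - 1 = Li) by nra.
  assert (HLc : Li - c = ib) by (unfold c; nra).
  assert (Hbc : beta * c = Li) by (unfold c; nra).
  set (Reg := fun x => (0 <= x /\ x < ib) \/ (c < x /\ x <= Li)).
  assert (Hsk : s k = c).
  { apply (uniqueness_sum _ _ _ (gen_qorbit beta e s k HG) Hqk). }
  assert (HR : forall m, (m <= k - 1)%nat -> Reg (s m)).
  { intros m Hm. destruct m as [|m].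
    - right. rewrite H0. split; lra.
    - destruct (Hreg (S m)) as [q [Hq Hrq]]; try lia.
      rewrite (uniqueness_sum _ _ _ (gen_qorbit beta e s (S m) HG) Hq). exact Hrq. }
  assert (Hek : e (S k) = 1%Z) by (apply (gen_dig1 _ _ _ _ HG); fold ib; lra).
  assert (Hrefl : forall m, (m <= k)%nat -> s (k + 1 + m)%nat = Li - s m /\
     (forall j, (1 <= j <= m)%nat -> e (k + 1 + j)%nat = (1 - e j)%Z)).
  { induction m; intros Hm.
    - split. 2: intros; lia.
      replace (k + 1 + 0)%nat with (S k) by lia. rewrite Hr, Hsk.
      rewrite Hek, H0. simpl. lra.
    - destruct IHm as [IHs IHd]; try lia.
      assert (Hrm := HR m ltac:(lia)).
      replace (k + 1 + S m)%nat with (S (k + 1 + m)) by lia.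
      rewrite (Hr (k + 1 + m)%nat), (Hr m), IHs.
      destruct Hrm as [Hrm|Hrm].
      + rewrite (gen_dig0 _ _ _ m HG) by (fold ib; lra).
        rewrite (gen_dig1 _ _ _ (k + 1 + m)%nat HG) by (rewrite IHs; fold ib; lra).
        split. simpl. lra.
        intros j Hj. destruct (Nat.eq_dec j (S m)) as [->|Hjm].
        * replace (k + 1 + S m)%nat with (S (k + 1 + m)) by lia.
          rewrite (gen_dig1 _ _ _ (k + 1 + m)%nat HG) by (rewrite IHs; fold ib; lra).
          rewrite (gen_dig0 _ _ _ m HG) by (fold ib; lra). reflexivity.
        * apply IHd; lia.
      + rewrite (gen_dig1 _ _ _ m HG) by (fold ib; lra).
        rewrite (gen_dig0 _ _ _ (k + 1 + m)%nat HG) by (rewrite IHs; fold ib; lra).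
        split. simpl. lra.
        intros j Hj. destruct (Nat.eq_dec j (S m)) as [->|Hjm].
        * replace (k + 1 + S m)%nat with (S (k + 1 + m)) by lia.
          rewrite (gen_dig0 _ _ _ (k + 1 + m)%nat HG) by (rewrite IHs; fold ib; lra).
          rewrite (gen_dig1 _ _ _ m HG) by (fold ib; lra). reflexivity.
        * apply IHd; lia. }
  assert (H2k : s (k + 1 + k)%nat = ib) by (rewrite (proj1 (Hrefl k ltac:(lia))), Hsk; lra).
  destruct (gen_half _ _ _ _ HG H2k) as [He2 Hs2].
  assert (Hnot : forall j, (j <= k + k)%nat -> s j <> ib).
  { intros j Hj. destruct (Nat.lt_ge_cases j k) as [Hjk|Hjk].
    - destruct (HR j ltac:(lia)); lra.
    - destruct (Nat.eq_dec j k) as [->|Hjk2]. rewrite Hsk; lra.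
      replace j with (k + 1 + (j - k - 1))%nat by lia.
      rewrite (proj1 (Hrefl (j - k - 1)%nat ltac:(lia))).
      destruct (HR (j - k - 1)%nat ltac:(lia)); lra. }
  set (P := (2 * (k + 1))%nat).
  assert (Hblk : forall b, s b = 1 -> s (b + P)%nat = 1 /\
     forall j, (j < P)%nat -> e (S (b + j)) = e (S j)).
  { intros b Hsb.
    assert (Hrg := gen_rig _ _ _ 0%nat b (k + 1 + k)%nat HG
          ltac:(rewrite Hsb; auto) ltac:(intros j Hj; simpl; apply Hnot; lia)).
    simpl in Hrg.
    assert (Hx : s (b + (k + 1 + k))%nat = / beta)
      by (rewrite <- Hrg by lia; rewrite H2k; reflexivity).
    destruct (gen_half _ _ _ _ HG Hx) as [Hx1 Hx2].
    split.
    - replace (b + P)%nat with (S (b + (k + 1 + k))) by (unfold P; lia). exact Hx2.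
    - intros j Hj.
      destruct (Nat.eq_dec j (k + 1 + k)) as [->|Hjn].
      + rewrite He2. exact Hx1.
      + symmetry. apply (gen_dig_eq _ _ _ j (b + j)%nat HG).
        * apply Hrg; lia.
        * apply Hnot; lia. }
  assert (Hper : forall q, s (q * P)%nat = 1).
  { induction q. simpl; exact H0.
    replace (S q * P)%nat with (q * P + P)%nat by lia. apply Hblk; auto. }
  exists (k + 1)%nat. split. lia. split.
  { replace (2 * (k + 1))%nat with (1 * P)%nat by (unfold P; lia). apply Hper. }
  split. { replace (k + 1)%nat with (S k) by lia. exact Hek. }
  intros i Hi. cbv zeta.
  set (r := ((i - 1) mod (2 * (k + 1)))%nat).
  assert (Hrl : (r < P)%nat) by (apply Nat.mod_upper_bound; unfold P; lia).
  assert (Hi' : i = S ((i - 1) / P * P + r)).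
  { pose proof (Nat.div_mod_eq (i - 1) P). unfold r. fold P. lia. }
  assert (Hei : e i = e (S r)).
  { rewrite Hi'. apply (proj2 (Hblk _ (Hper ((i - 1) / P)%nat))); auto. }
  rewrite Hei. destruct (Nat.ltb r (k + 1)) eqn:Hlt.
  - reflexivity.
  - apply Nat.ltb_ge in Hlt.
    destruct (Nat.eq_dec r (k + 1 + k)) as [->|Hrn].
    + replace (k + 1 + k - (k + 1))%nat with k by lia. rewrite He2, Hek. reflexivity.
    + replace (S r) with (k + 1 + (r - k))%nat by lia.
      replace (S (r - (k + 1))) with (r - k)%nat by lia.
      apply (proj2 (Hrefl k ltac:(lia))). unfold P in Hrl. lia.
Qed.

Definition gorb (beta : R) (m : nat) : R := Nat.iter m (greedy_map beta) 1.

Lemma gorb_bound beta : 1 < beta -> beta < 2 -> forall m, 0 <= gorb beta m <= 1.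
Proof.
  intros H1 H2. induction m.
  - unfold gorb; simpl; lra.
  - change (gorb beta (S m)) with (greedy_map beta (gorb beta m)). unfold greedy_map.
    destruct (Rlt_dec _ 1).
    + destruct (base_Int_part (beta * gorb beta m)). lra.
    + nra.
Qed.

Lemma gorb_step beta : 1 < beta -> beta < 2 -> forall m,
  gorb beta (S m) = beta * gorb beta m - IZR (greedy_digit beta 1 (S m)) /\
  (greedy_digit beta 1 (S m) = 0%Z \/ greedy_digit beta 1 (S m) = 1%Z) /\
  0 <= gorb beta (S m) < 1.
Proof.
  intros H1 H2 m. pose proof (gorb_bound beta H1 H2 m) as Hb.
  unfold greedy_digit. replace (S m - 1)%nat with m by lia.
  fold (gorb beta m).
  destruct (base_Int_part (beta * gorb beta m)) as [B1 B2].
  set (d := Int_part (beta * gorb beta m)) in *.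
  assert (Hd1 : (-1 < d)%Z) by (apply lt_IZR; simpl; nra).
  assert (Hd2 : (d < 2)%Z) by (apply lt_IZR; simpl; nra).
  assert (Hd : d = 0%Z \/ d = 1%Z) by lia.
  change (gorb beta (S m)) with (greedy_map beta (gorb beta m)).
  unfold greedy_map. destruct (Rlt_dec (gorb beta m) 1) as [Hl|Hl].
  - fold d. split; [reflexivity|]. split; auto. lra.
  - assert (gorb beta m = 1) by lra.
    assert (d = 1%Z).
    { destruct Hd as [Hd|Hd]; auto. rewrite Hd, H in B2. simpl in B2. lra. }
    rewrite H, H0. simpl. split; [ring|]. split; [auto|lra].
Qed.

Lemma case_B_gn beta n : 1 < beta -> beta < 2 -> (1 <= n)%nat ->
  (forall m, (n < m)%nat -> greedy_digit beta 1 m = 0%Z) -> gorb beta n = 0.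
Proof.
  intros H1 H2 Hn Hz.
  destruct (gorb_bound beta H1 H2 n) as [G0 G1].
  destruct (Rle_lt_or_eq_dec 0 _ G0) as [Gp|Ge]; [|auto].
  exfalso.
  assert (Hpow : forall j, gorb beta (n + j) = beta ^ j * gorb beta n).
  { induction j. replace (n + 0)%nat with n by lia. simpl; ring.
    replace (n + S j)%nat with (S (n + j)) by lia.
    destruct (gorb_step beta H1 H2 (n + j)) as [E _]. rewrite E, Hz by lia.
    rewrite IHj. simpl. ring. }
  destruct (pow_lt_1_zero (/ beta)) with (y := gorb beta n) as [N HN]; auto.
  { rewrite Rabs_right. rewrite <- Rinv_1; apply Rinv_lt_contravar; lra.
    left; apply Rinv_0_lt_compat; lra. }
  specialize (HN N ltac:(lia)). rewrite pow_inv in HN.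
  assert (Hp : 0 < beta ^ N) by (apply pow_lt; lra).
  rewrite Rabs_right in HN by (left; apply Rinv_0_lt_compat; lra).
  assert (1 < beta ^ N * gorb beta n).
  { apply (Rmult_lt_compat_l (beta ^ N)) in HN; auto.
    rewrite Rinv_r in HN; lra. }
  destruct (gorb_step beta H1 H2 (n + N - 1)) as [_ [_ Hlt]].
  replace (S (n + N - 1)) with (n + N)%nat in Hlt by lia.
  rewrite Hpow in Hlt. lra.
Qed.

Theorem lemma3p4 (beta : R) (eta : nat -> Z) :
  (1 + sqrt 5) / 2 < beta -> beta < 2 ->
  quasi_greedy_one beta eta ->
  (exists k : nat, (1 <= k)%nat /\
     Qorbit beta eta k (/ beta * / (beta - 1)) /\
     forall i : nat, (1 <= i)%nat -> (i <= k - 1)%nat ->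
       exists q : R, Qorbit beta eta i q /\
         ((0 <= q /\ q < / beta) \/
          (/ beta * / (beta - 1) < q /\ q <= / (beta - 1)))) ->
  greedy_finite beta 1 /\
  exists (n0 : nat) (w : nat -> Z),
    (1 <= n0)%nat /\
    (forall j : nat, (1 <= j <= n0)%nat -> w j = 0%Z \/ w j = 1%Z) /\
    w n0 = 1%Z /\
    periodic_with_reflection eta w n0.
Proof.
  intros Hphi Hb2 Hq Hk.
  assert (H1 : 1 < beta).
  { assert (0 <= sqrt 5) by apply sqrt_pos.
    assert (sqrt 5 * sqrt 5 = 5) by (apply sqrt_sqrt; lra). nra. }
  assert (Hfin : forall s, GEN beta eta s -> 
    exists n0, (1 <= n0)%nat /\ s (2 * n0)%nat = 1 /\
    exists (w : nat -> Z),
    (forall j : nat, (1 <= j <= n0)%nat -> w j = 0%Z \/ w j = 1%Z) /\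
    w n0 = 1%Z /\ periodic_with_reflection eta w n0).
  { intros s HG. destruct (gen_main _ _ _ HG Hphi Hb2 Hk) as [n0 [Hn0 [Hs [Hw Hp]]]].
    exists n0. split; auto. split; auto. exists eta. split; [|split; auto].
    intros j Hj. replace j with (S (j - 1)) by lia. apply HG. }
  destruct Hq as [[Hnf Heq] | [n [Hn [Hdn [Hz Heq]]]]].
  - exfalso.
    assert (HG : GEN beta eta (gorb beta)).
    { split; auto. split.
      { intro m. rewrite Heq by lia. apply (gorb_step beta H1 Hb2 m). }
      split. { apply gorb_bound; auto. }
      split. { reflexivity. }
      split. { intro m. rewrite Heq by lia. apply (gorb_step beta H1 Hb2 m). }
      intro N. apply NNPP. intro Hc. apply Hnf. exists (S N).
      intros m Hm. apply NNPP. intro Hd.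
      apply Hc. exists (m - 1)%nat. split. lia.
      replace (S (m - 1)) with m by lia. rewrite Heq by lia. auto. }
    destruct (Hfin _ HG) as [n0 [Hn0 [Hs _]]].
    destruct (gorb_step beta H1 Hb2 (2 * n0 - 1)) as [_ [_ Hlt]].
    replace (S (2 * n0 - 1)) with (2 * n0)%nat in Hlt by lia. lra.
  - split.
    { exists (S n). intros m Hm. apply Hz. lia. }
    assert (Hgn := case_B_gn beta n H1 Hb2 Hn Hz).
    assert (Hd1 : greedy_digit beta 1 1 = 1%Z).
    { destruct (gorb_step beta H1 Hb2 0) as [E [[D|D] B]]; auto.
      change (gorb beta 0) with 1 in E. rewrite D in E. lra. }
    assert (Hn2 : (2 <= n)%nat).
    { destruct (Nat.eq_dec n 1) as [->|]; [|lia]. exfalso.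
      destruct (gorb_step beta H1 Hb2 0) as [E _].
      change (gorb beta 0) with 1 in E. rewrite Hd1, Hgn in E. lra. }
    assert (Hbn : beta * gorb beta (n - 1) = 1).
    { destruct (gorb_step beta H1 Hb2 (n - 1)) as [E _].
      replace (S (n - 1)) with n in E by lia. rewrite Hdn, Hgn in E. lra. }
    assert (Heq' : forall i, eta (S i) = if Nat.eqb (i mod n + 1) n
        then (greedy_digit beta 1 n - 1)%Z else greedy_digit beta 1 (S (i mod n))).
    { intro i. rewrite (Heq (S i)) by lia. cbv zeta. replace (S i - 1)%nat with i by lia.
      rewrite Nat.add_1_r. reflexivity. }
    assert (Hnz : n <> 0%nat) by lia.
    assert (HG : GEN beta eta (fun i => gorb beta (i mod n))).
    { split; auto. split.
      { intro m. rewrite Heq'. destruct (Nat.eqb _ _). left; rewrite Hdn; reflexivity.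
        apply (gorb_step beta H1 Hb2). }
      split. { intro; apply gorb_bound; auto. }
      split. { cbv beta. rewrite Nat.Div0.mod_0_l. reflexivity. }
      split.
      { intro i. cbv beta. rewrite Heq'.
        pose proof (Nat.div_mod_eq i n) as Hdm.
        pose proof (Nat.mod_upper_bound i n Hnz) as Hub.
        set (r := (i mod n)%nat) in *. set (q := (i / n)%nat) in *.
        destruct (Nat.eqb (r + 1) n) eqn:Eq.
        - apply Nat.eqb_eq in Eq.
          rewrite <- (Nat.mod_unique (S i) n (S q) 0) by lia.
          rewrite Hdn. replace r with (n - 1)%nat by lia. rewrite Hbn.
          change (gorb beta 0) with 1. simpl. ring.
        - apply Nat.eqb_neq in Eq.
          rewrite <- (Nat.mod_unique (S i) n q (S r)) by lia.
          apply (gorb_step beta H1 Hb2). }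
      intro N. exists (N * n)%nat. split. nia.
      rewrite Heq', Nat.Div0.mod_mul. change (0 + 1)%nat with 1%nat.
      destruct (Nat.eqb 1 n) eqn:E. apply Nat.eqb_eq in E; lia.
      rewrite Hd1. lia. }
    destruct (Hfin _ HG) as [n0 [Hn0 [_ Hw]]]. exists n0. destruct Hw as [w Hw]. exists w. split; auto.
Qed.
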